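(* Let $W>0$ and define $C(x)=W\log_2(1+x)$ for $x\ge 0$. Consider a monitoring receiver that simultaneously receives, over a two-user Gaussian multiple access channel, a transmission from an announcer $A$ with fixed rate $R_A\ge 0$ and received SNR $\gamma_A\ge 0$, and a downlink transmission from a base station $B$ with received SNR $\gamma_B\ge 0$. Let $\Gamma_A=C^{-1}(R_A)=2^{R_A/W}-1$. Suppose $B$ knows $R_A$ and $\gamma_B$ (but not $\gamma_A$) and selects its rate as $R_B=C(\Gamma_B)$ with $\Gamma_B=\frac{\gamma_B}{1+\Gamma_A}$. Then the decodability of $A$'s transmission depends solely on whether $R_A\le C(\gamma_A)$ (equivalently $\gamma_A\ge\Gamma_A$): whenever $R_A\le C(\gamma_A)$, the rate pair $(R_A,R_B)$ satisfies all three multiple access channel inequalities $$R_A\le C(\gamma_A),\qquad R_B\le C(\gamma_B),\qquad R_A+R_B\le C(\gamma_A+\gamma_B),$$ so both transmissions can be decoded, while if $R_A> C(\gamma_A)$ the transmission of $A$ cannot be decoded.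
   Context: Decoding is in the information-theoretic sense with Gaussian codebooks: the transmission of $A$ is decodable at the receiver either by first decoding $B$ treating $A$ as noise, subtracting it, and then decoding $A$ in noise (possible iff $R_A\le C(\gamma_A)$), or by joint decoding of both transmissions, which is possible iff all three multiple access channel inequalities above hold. *)

(* Defs.v *)
From Stdlib Require Import Reals.
Open Scope R_scope.

Definition Cap (W x : R) : R := W * (ln (1 + x) / ln 2).

Definition Cinv (W r : R) : R := Rpower 2 (r / W) - 1.

Definition mac_region (W RA RB gA gB : R) : Prop :=
  RA <= Cap W gA /\ RB <= Cap W gB /\ RA + RB <= Cap W (gA + gB).

(* Decodability of A's transmission: either by SIC (decode B treating A as
   noise, subtract, decode A; possible iff RA <= C(gA)), or by joint decoding
   (possible iff all three MAC inequalities hold). *)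
Definition decodable_A (W RA RB gA gB : R) : Prop :=
  RA <= Cap W gA \/ mac_region W RA RB gA gB.

(* Main.v *)
Require Import Defs.
From Stdlib Require Import Reals Lra.
Open Scope R_scope.

Lemma Cap_mono W x y : 0 < W -> -1 < x -> x <= y -> Cap W x <= Cap W y.
Proof.
  intros HW Hx Hxy. unfold Cap.
  assert (L : 0 < ln 2) by (rewrite <- ln_1; apply ln_increasing; lra).
  apply Rmult_le_compat_l; [lra|].
  unfold Rdiv. apply Rmult_le_compat_r.
  - left; apply Rinv_0_lt_compat; exact L.
  - destruct (Rle_lt_or_eq_dec x y Hxy) as [h|h]; [left; apply ln_increasing; lra| rewrite h; lra].
Qed.

Lemma Cap_strict W x y : 0 < W -> -1 < x -> x < y -> Cap W x < Cap W y.
Proof.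
  intros HW Hx Hxy. unfold Cap.
  assert (L : 0 < ln 2) by (rewrite <- ln_1; apply ln_increasing; lra).
  apply Rmult_lt_compat_l; [lra|].
  unfold Rdiv. apply Rmult_lt_compat_r.
  - apply Rinv_0_lt_compat; exact L.
  - apply ln_increasing; lra.
Qed.

Theorem corollary1 (W RA gA gB : R) :
  0 < W -> 0 <= RA -> 0 <= gA -> 0 <= gB ->
  let GammaA := Cinv W RA in
  let GammaB := gB / (1 + GammaA) in
  let RB := Cap W GammaB in
  (decodable_A W RA RB gA gB <-> RA <= Cap W gA) /\
  (RA <= Cap W gA <-> gA >= GammaA) /\
  (RA <= Cap W gA -> mac_region W RA RB gA gB) /\
  (RA > Cap W gA -> ~ decodable_A W RA RB gA gB).
Proof.
  intros HW HRA HgA HgB GammaA GammaB RB.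
  assert (L : 0 < ln 2) by (rewrite <- ln_1; apply ln_increasing; lra).
  assert (HE : 1 + GammaA = exp (RA / W * ln 2)).
  { unfold GammaA, Cinv, Rpower. ring. }
  assert (HE1 : 1 <= 1 + GammaA).
  { rewrite HE. rewrite <- exp_0. apply exp_le_3 || idtac.
    destruct (Rle_lt_or_eq_dec 0 (RA / W * ln 2)) as [H|H].
    - apply Rmult_le_pos; [apply Rmult_le_pos; [lra| left; apply Rinv_0_lt_compat; lra]|lra].
    - left; apply exp_increasing; exact H.
    - rewrite <- H; lra. }
  assert (HRAc : RA = Cap W GammaA).
  { unfold Cap. replace (1 + GammaA) with (1 + GammaA) by ring.
    rewrite HE, ln_exp. field; lra. }
  assert (P2 : RA <= Cap W gA <-> gA >= GammaA).
  { split; intro H.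
    - destruct (Rlt_or_le gA GammaA) as [H'|H']; [|lra].
      exfalso. pose proof (Cap_strict W gA GammaA HW ltac:(lra) H'). lra.
    - rewrite HRAc. apply Cap_mono; lra. }
  assert (P3 : RA <= Cap W gA -> mac_region W RA RB gA gB).
  { intro H. pose proof (proj1 P2 H) as G.
    assert (HGB : 0 <= GammaB).
    { unfold GammaB. unfold Rdiv. apply Rmult_le_pos; [lra|].
      left; apply Rinv_0_lt_compat; lra. }
    split; [exact H|split].
    - unfold RB. apply Cap_mono; [lra|lra|].
      unfold GammaB. apply (Rmult_le_reg_r (1 + GammaA)); [lra|].
      unfold Rdiv. rewrite Rmult_assoc, Rinv_l by lra. nra.
    - assert (Hs : RA + RB = Cap W (GammaA + gB)).
      { rewrite HRAc. unfold RB, Cap.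
        replace (1 + (GammaA + gB)) with ((1 + GammaA) * (1 + GammaB)).
        + rewrite ln_mult by lra. field; lra.
        + unfold GammaB. field; lra. }
      rewrite Hs. apply Cap_mono; lra. }
  split; [|split; [exact P2|split; [exact P3|]]].
  - unfold decodable_A. split; intro H.
    + destruct H as [H|[H _]]; exact H.
    + left; exact H.
  - intros H D. destruct D as [D|[D _]]; lra.
Qed.
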